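(* Let $m\ge 2$, let $B$ be a blocker in $CK(2m)$, and let $e=[i,j]\in B$ with $0\le i<j\le 2m-1$, so that $j-i-1=2k$ and $2m-(j-i)-1=2l$ with $k,l\ge 0$, $k+l=m-1$. Let $G_1^+$ be the complete convex geometric graph on the vertices $i,i+1,\dots,j$ and $G_2^+$ the one on the vertices $j,j+1,\dots,2m-1,0,1,\dots,i$. Then $B\cap E(G_1^+)$ is a blocker in $G_1^+$ (a blocking set with exactly $k+1$ edges), $B\cap E(G_2^+)$ is a blocker in $G_2^+$ (a blocking set with exactly $l+1$ edges), and no edge of $B$ crosses $e$ in an interior point. Consequently $B$ is crossing-free.
   Context: $CK(2m)$ denotes the complete convex geometric graph whose vertices are the $2m$ vertices of a convex polygon, labelled cyclically $0,1,\dots,2m-1$, and whose edges are all straight segments between pairs of vertices. Two edges with four distinct endpoints cross iff their endpoints alternate in the cyclic order. For a set of $2n$ points in convex position, consider the complete convex geometric graph on them; an SPM is a set of $n$ pairwise disjoint edges (no common endpoint and no crossing), a blocking set is a set of edges containing at least one edge of every SPM, and a blocker is a blocking set of exactly $n$ edges. $E(H)$ denotes the edge set of $H$. *)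

(* Defs.v *)
From mathcomp Require Import all_boot.
Set Implicit Arguments. Unset Strict Implicit. Unset Printing Implicit Defensive.

(* Vertices of the convex polygon: 'I_N, labelled cyclically 0..N-1.
   An edge is represented canonically as a pair (a, b) with a < b. *)
Definition edge N := ('I_N * 'I_N)%type.

(* Edge set of the complete convex geometric graph on the vertex subset V
   (points of V are in convex position with the inherited cyclic order). *)
Definition E_of N (V : {set 'I_N}) : {set edge N} :=
  [set p : edge N | (p.1 < p.2) && (p.1 \in V) && (p.2 \in V)].

(* Two edges with four distinct endpoints cross iff their endpoints alternate
   in the cyclic order; for canonical pairs a<b, c<d this is
   a<c<b<d or c<a<d<b (which already forces the four endpoints distinct). *)
Definition cross N (e f : edge N) : bool :=
  ((e.1 < f.1) && (f.1 < e.2) && (e.2 < f.2)) ||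
  ((f.1 < e.1) && (e.1 < f.2) && (f.2 < e.2)).

Definition share_endpoint N (e f : edge N) : bool :=
  (e.1 == f.1) || (e.1 == f.2) || (e.2 == f.1) || (e.2 == f.2).

Definition disjoint_edges N (e f : edge N) : bool :=
  ~~ share_endpoint e f && ~~ cross e f.

Definition SPM N (V : {set 'I_N}) (M : {set edge N}) : bool :=
  (M \subset E_of V) && (#|M| * 2 == #|V|) &&
  [forall e in M, forall f in M, (e != f) ==> disjoint_edges e f].

Definition blocking_set N (V : {set 'I_N}) (B : {set edge N}) : Prop :=
  B \subset E_of V /\
  forall M : {set edge N}, SPM V M -> exists2 e, e \in B & e \in M.

Definition blocker N (V : {set 'I_N}) (B : {set edge N}) : Prop :=
  blocking_set V B /\ #|B| * 2 = #|V|.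

(* Main.v *)
Require Import Defs.
From mathcomp Require Import all_boot.
From Stdlib Require Import Lia.
Set Implicit Arguments. Unset Strict Implicit. Unset Printing Implicit Defensive.

Definition ends N (M : {set edge N}) : {set 'I_N} := (fst @: M) :|: (snd @: M).

Definition matching N (M : {set edge N}) :=
  [forall e in M, forall f in M, (e != f) ==> disjoint_edges e f].

Lemma matchingP N (M : {set edge N}) :
  reflect (forall p q, p \in M -> q \in M -> p != q -> disjoint_edges p q) (matching M).
Proof.
apply: (iffP idP).
- move=> /forall_inP H p q pM qM pq; move: (H p pM) => /forall_inP /(_ q qM) /implyP; exact.
- move=> H; apply/forall_inP => p pM; apply/forall_inP => q qM; apply/implyP; exact: H.
Qed.

Lemma SPME N (V : {set 'I_N}) (M : {set edge N}) :
  SPM V M = [&& M \subset E_of V, #|M| * 2 == #|V| & matching M].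
Proof. by rewrite /SPM -andbA. Qed.

Lemma ends_card N (M : {set edge N}) :
  {in M, forall p : edge N, p.1 < p.2} ->
  (forall p q, p \in M -> q \in M -> p != q -> ~~ share_endpoint p q) ->
  #|ends M| = #|M| * 2.
Proof.
move=> lt H.
have i1 : {in M &, injective fst}.
  move=> p q pM qM e; apply/eqP; apply: contraT => pq.
  by move: (H p q pM qM pq); rewrite /share_endpoint e eqxx.
have i2 : {in M &, injective snd}.
  move=> p q pM qM e; apply/eqP; apply: contraT => pq.
  by move: (H p q pM qM pq); rewrite /share_endpoint e eqxx !orbT.
rewrite /ends cardsU (card_in_imset i1) (card_in_imset i2).
suff -> : fst @: M :&: snd @: M = set0 by rewrite cards0 subn0 muln2 addnn.
apply/setP => x; rewrite !inE; apply/negP => /andP [/imsetP [p pM ->] /imsetP [q qM e]].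
case: (eqVneq p q) => [epq|pq].
  by subst q; move: (lt p pM); rewrite e ltnn.
by move: (H p q pM qM pq); rewrite /share_endpoint e eqxx !orbT.
Qed.

Lemma E_ofP N (V : {set 'I_N}) (p : edge N) : reflect [/\ p.1 < p.2, p.1 \in V & p.2 \in V] (p \in E_of V).
Proof. rewrite inE; apply: (iffP idP) => [/andP [/andP [a b] c]|[a b c]]; first by split. by rewrite a b c. Qed.

Lemma match_share N (M : {set edge N}) p q : matching M -> p \in M -> q \in M -> p != q -> ~~ share_endpoint p q.
Proof. by move=> /matchingP H pM qM pq; case/andP: (H p q pM qM pq). Qed.

Lemma ends_sub N (V : {set 'I_N}) (M : {set edge N}) : M \subset E_of V -> ends M \subset V.
Proof.
move=> /subsetP S; apply/subsetP => x; rewrite inE => /orP [] /imsetP [p /S /E_ofP [_ a b] ->] //.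
Qed.

Lemma SPM_cover N (V : {set 'I_N}) (M : {set edge N}) : SPM V M -> V \subset ends M.
Proof.
case/andP => /andP [S /eqP C] Mm.
have lt : {in M, forall p : edge N, p.1 < p.2} by move=> p /(subsetP S) /E_ofP [].
have E := ends_card lt (fun p q => match_share Mm).
have Sub := ends_sub S.
have : #|V| <= #|ends M| by rewrite E C.
move=> h; have /eqP -> : ends M == V by rewrite eqEcard Sub h.
exact: subxx.
Qed.

Ltac genord := repeat match goal with
 | |- context [@nat_of_ord ?n ?x] => let y := fresh "y" in set y := @nat_of_ord n x; clearbody y
 end.

Ltac revall := repeat match goal with
 | H : is_true (_ <= _) |- _ => revert H
 | H : (_ <= _) = true |- _ => revert H
 | H : is_true (@eq_op nat _ _) |- _ => revert H
 | H : (@eq_op nat _ _) = true |- _ => revert H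
 | H : @eq nat _ _ |- _ => revert H
 | H : is_true (_ <= _) \/ is_true (_ <= _) |- _ => revert H
 end.

Ltac tolia0 := repeat match goal with
 | H : is_true (_ <= _) |- _ => apply (elimT leP) in H
 | H : is_true (_ == _) |- _ => apply (elimT eqP) in H
 | H : (_ <= _) = true |- _ => apply (elimT leP) in H
 | H : (_ == _) = true |- _ => apply (elimT eqP) in H
 | H : is_true (_ <= _) \/ is_true (_ <= _) |- _ => destruct H as [H|H]
 | |- (_ <= _) = true => apply/leP
 | |- is_true (_ <= _) => apply/leP
 | |- is_true (_ == _) => apply/eqP
 end; repeat rewrite <- ?plusE, <- ?minusE, <- ?multE in *; lia.

Ltac tolia := revall; genord; intros; tolia0.

Lemma test a b c : a < b -> b <= c + 2 -> a - 1 < c + 2.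
Proof. move=> h1 h2; tolia. Qed.

Definition cls N (c : nat) : {set edge N} :=
  [set p : edge N | (p.1 < p.2) && ((p.1 + p.2) %% N == c)].

Lemma mod_uniq N x y z : y < N -> z < N -> (x + y) %% N = (x + z) %% N -> y = z.
Proof.
move=> hy hz /eqP; rewrite eqn_modDl => /eqP; rewrite !modn_small //.
Qed.

Lemma nocross_mod N a b c d : a < c -> c < b -> b < d -> d < N ->
  (a + b) %% N = (c + d) %% N -> False.
Proof.
move=> h1 h2 h3 h4 E.
have h5 : c + d - (a + b) < N by tolia.
have h0 : 0 < N by tolia.
have h6 : (a + b + 0) %% N = (a + b + (c + d - (a + b))) %% N.
  by rewrite addn0 subnKC ?E //; tolia.
have := mod_uniq h0 h5 h6. by tolia.
Qed.

Lemma cls_matching N c : matching (cls N c).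
Proof.
apply/matchingP => -[a b] -[x y]; rewrite !inE /= => /andP [ab /eqP E1] /andP [xy /eqP E2] ne.
rewrite -E1 in E2; clear E1.
have ltb : b < N by []. have lty : y < N by [].
have lta : a < N by []. have ltx : x < N by [].
rewrite /disjoint_edges /share_endpoint /cross /=; apply/andP; split.
- apply/negP => /orP [/orP [/orP [/eqP h|/eqP h]|/eqP h]|/eqP h].
  + have h' : b = y.
      apply: val_inj; apply: (@mod_uniq N a) => //. by rewrite -E2 h.
    by move: ne; rewrite h h' eqxx.
  + have h' : b = x.
      apply: val_inj; apply: (@mod_uniq N a) => //. by rewrite -E2 h addnC.
    subst. by tolia.
  + have h' : a = y.
      apply: val_inj; apply: (@mod_uniq N b) => //. by rewrite addnC -E2 h.
    subst. by tolia.
  + have h' : a = x.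
      apply: val_inj; apply: (@mod_uniq N b) => //. by rewrite addnC -E2 h addnC.
    by move: ne; rewrite h h' eqxx.
- apply/negP => /orP [/andP [/andP [h1 h2] h3]|/andP [/andP [h1 h2] h3]].
  + by apply: (nocross_mod h1 h2 h3 lty); rewrite E2.
  + by apply: (nocross_mod h1 h2 h3 ltb); rewrite E2.
Qed.

Lemma SPM_intro N (V : {set 'I_N}) (M : {set edge N}) :
  M \subset E_of V -> V \subset ends M -> matching M -> SPM V M.
Proof.
move=> S C Mm.
have lt : {in M, forall p : edge N, p.1 < p.2} by move=> p /(subsetP S) /E_ofP [].
have E := ends_card lt (fun p q => match_share Mm).
have EV : ends M = V by apply/eqP; rewrite eqEsubset ends_sub.
by rewrite SPME S Mm -EV E eqxx.
Qed.

Lemma cls_cover N c (x : 'I_N) : ~~ odd N -> odd c -> c < N ->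
  exists y : 'I_N, (y != x) && ((x + y) %% N == c).
Proof.
move=> eN oc cN.
have Npos : 0 < N by apply: leq_ltn_trans cN.
exists (Ordinal (ltn_pmod (c + N - x) Npos)) => /=.
have E : (x + (c + N - x) %% N) %% N = c.
  rewrite modnDmr subnKC; last by apply: leq_trans (ltnW (ltn_ord x)) (leq_addl _ _).
  by rewrite modnDr modn_small.
rewrite E eqxx andbT; apply/negP => /eqP h.
have h' : (c + N - x) %% N = x by have := congr1 val h.
move: E; rewrite h' addnn => E.
have : odd (x.*2 %% N) = odd c by rewrite E.
rewrite odd_mod; last exact: negbTE eN.
by rewrite odd_double oc.
Qed.

Lemma cls_SPM N c : ~~ odd N -> odd c -> c < N -> SPM [set: 'I_N] (cls N c).
Proof.
move=> eN oc cN; apply: SPM_intro; last exact: cls_matching.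
- by apply/subsetP => p; rewrite !inE => /andP [-> _].
- apply/subsetP => x _; have [y /andP [yx /eqP E]] := cls_cover x eN oc cN.
  rewrite /ends inE; case: (ltngtP x y) => [xy|yx'|exy].
  + apply/orP; left; apply/imsetP; exists (x, y) => //; by rewrite inE /= xy E eqxx.
  + apply/orP; right; apply/imsetP; exists (y, x) => //; by rewrite inE /= yx' addnC E eqxx.
  + by move: yx; rewrite (val_inj exy) eqxx.
Qed.

Lemma count_lb (T : finType) (B : {set T}) n (S : 'I_n -> {set T}) :
  (forall t, exists2 x, x \in B & x \in S t) ->
  (forall t u x, x \in B -> x \in S t -> x \in S u -> t = u) ->
  n <= #|B|.
Proof.
move=> H U.
have [g Hg] : exists g : 'I_n -> T, forall t, (g t \in B) && (g t \in S t).
  have H' : forall t, exists x, (x \in B) && (x \in S t).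
    by move=> t; have [x xB xS] := H t; exists x; rewrite xB xS.
  by exists (fun t => xchoose (H' t)) => t; exact: (xchooseP (H' t)).
have gi : injective g.
  move=> t u e; have /andP [gB gS] := Hg t; have /andP [_ gS'] := Hg u.
  have gS2 : g t \in S u by rewrite e.
  exact: (U t u (g t) gB gS gS2).
rewrite -{1}(card_ord n) -(card_imset _ gi); apply: subset_leq_card.
by apply/subsetP => y /imsetP [t _ ->]; case/andP: (Hg t).
Qed.

Lemma count_lb1 (T : finType) (B : {set T}) n (S : 'I_n -> {set T}) e :
  (forall t, exists2 x, x \in B & x \in S t) ->
  (forall t u x, x \in B -> x \in S t -> x \in S u -> t = u) ->
  e \in B -> (forall t, e \notin S t) ->
  n < #|B|.
Proof.
move=> H U eB eS.
have := @count_lb _ (B :\ e) n S.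
have -> : #|B :\ e| = #|B|.-1 by rewrite (cardsD1 e B) eB.
have : 0 < #|B| by apply/card_gt0P; exists e.
case: #|B| => // k _ /=; apply.
- move=> t; have [x xB xS] := H t; exists x => //; rewrite !inE xB andbT.
  by apply/negP => /eqP ex; move: (eS t); rewrite -ex xS.
- by move=> t u x; rewrite inE => /andP [_ xB]; apply: U.
Qed.

Lemma lb_full N (B : {set edge N}) : ~~ odd N -> blocking_set [set: 'I_N] B -> N./2 <= #|B|.
Proof.
move=> eN [_ H].
have cl : forall t : 'I_N./2, (t.*2.+1 < N).
  move=> t; have := ltn_ord t; rewrite -(leq_double) doubleS => h.
  apply: (leq_trans h); rewrite -{2}(odd_double_half N) (negbTE eN) add0n //.
apply: (@count_lb _ B N./2 (fun t => cls N (t : nat).*2.+1)).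
- move=> t; apply: H; apply: cls_SPM => //; by rewrite /= odd_double.
- move=> t u x _; rewrite !inE => /andP [_ /eqP E1] /andP [_ /eqP E2].
  apply: val_inj; apply: double_inj; apply: succn_inj; by rewrite -E1 -E2.
Qed.

Section Transport.
Variables (N : nat) (V : {set 'I_N}).
Let h : 'I_#|V| -> 'I_N := @enum_val _ (mem V).

Lemma enumV_sorted : sorted (fun a b : 'I_N => a < b) (enum V).
Proof.
have -> : enum V = filter (mem V) (enum 'I_N) by rewrite enumT.
apply: (subseq_sorted _ (filter_subseq _ _)).
  by move=> a b c; apply: ltn_trans.
have : sorted ltn (map val (enum 'I_N)) by rewrite val_enum_ord iota_ltn_sorted.
by rewrite sorted_map.
Qed.

Lemma h_mono (x y : 'I_#|V|) : x < y -> h x < h y.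
Proof.
move=> xy; rewrite /h !(enum_val_nth (h x)).
apply: (sorted_ltn_nth _ (h x) enumV_sorted) => //.
- by move=> a b c; apply: ltn_trans.
- by rewrite inE -cardE.
- by rewrite inE -cardE.
Qed.

Lemma hlt (x y : 'I_#|V|) : (h x < h y) = (x < y).
Proof.
case: (ltngtP x y) => [xy|yx|exy].
- by rewrite h_mono.
- by apply/negbTE; rewrite -leqNgt ltnW // h_mono.
- by rewrite (val_inj exy) ltnn.
Qed.

Lemma heq (x y : 'I_#|V|) : (h x == h y) = (x == y).
Proof. by rewrite (inj_eq enum_val_inj). Qed.

Definition H (p : edge #|V|) : edge N := (h p.1, h p.2).

Lemma H_inj : injective H.
Proof. move=> [a b] [c d] [] /enum_val_inj -> /enum_val_inj -> //. Qed.

Lemma H_share p q : share_endpoint (H p) (H q) = share_endpoint p q.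
Proof. by rewrite /share_endpoint /= !heq. Qed.

Lemma H_cross p q : cross (H p) (H q) = cross p q.
Proof. by rewrite /cross /= !hlt. Qed.

Lemma transport_lb (B : {set edge N}) :
  blocking_set V B -> ~~ odd #|V| -> #|V|./2 <= #|B|.
Proof.
move=> [BS Hb] eV.
pose B0 := [set p : edge #|V| | H p \in B].
have : blocking_set [set: 'I_#|V|] B0.
  split.
  - apply/subsetP => p; rewrite !inE => /(subsetP BS) /E_ofP [lt _ _].
    by rewrite -hlt lt.
  - move=> M SM.
    have [e eB eM'] : exists2 e, e \in B & e \in H @: M.
      apply: Hb; rewrite SPME; case/andP: SM => /andP [SS /eqP C] Mm.
      apply/and3P; split.
      + apply/subsetP => e /imsetP [p pM ->].
        move: (subsetP SS p pM) => /E_ofP [lt _ _].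
        by apply/E_ofP; split; rewrite /= ?hlt // enum_valP.
      + by rewrite (card_imset _ H_inj) C cardsT card_ord.
      + apply/matchingP => e f /imsetP [p pM ->] /imsetP [q qM ->] ne.
        have pq : p != q by apply: contraNneq ne => ->.
        move/matchingP: Mm => /(_ p q pM qM pq).
        by rewrite /disjoint_edges H_share H_cross.
    case/imsetP: eM' => p pM ep; exists p => //; by rewrite inE -ep.
move=> /(lb_full eV) le; apply: (leq_trans le).
rewrite -(card_imset _ H_inj); apply: subset_leq_card.
by apply/subsetP => e /imsetP [p]; rewrite inE => pB ->.
Qed.
End Transport.

Ltac bdestr := repeat match goal with
 | H : is_true (_ || _) |- _ => apply Bool.orb_prop in H; destruct H as [H|H]
 | H : is_true (_ && _) |- _ => let H1 := fresh "H" in apply andb_prop in H; destruct H as [H H1]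
 | H : (_ || _) = true |- _ => apply Bool.orb_prop in H; destruct H as [H|H]
 | H : (_ && _) = true |- _ => let H1 := fresh "H" in apply andb_prop in H; destruct H as [H H1]
 | H : _ \/ _ |- _ => destruct H as [H|H]
 | H : _ /\ _ |- _ => let H1 := fresh "H" in destruct H as [H H1]
 end.
Ltac blia := bdestr; tolia.

Lemma sep_nat a b c d i j : a < b -> c < d -> i <= a -> b <= j ->
  (c < i \/ j < c) -> (d < i \/ j < d) ->
  ~~ [|| a == c, a == d, b == c | b == d] &&
  ~~ ((a < c < b) && (b < d) || (c < a < d) && (d < b)) /\
  ~~ [|| c == a, c == b, d == a | d == b] &&
  ~~ ((c < a < d) && (d < b) || (a < c < b) && (b < d)).
Proof.
move=> h1 h2 h3 h4 h5 h6; split; apply/andP; split; apply/negP => H; blia.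
Qed.

Lemma sep_disj N (p q : edge N) (i j : nat) : p.1 < p.2 -> q.1 < q.2 ->
  i <= p.1 -> p.2 <= j -> (q.1 < i \/ j < q.1) -> (q.2 < i \/ j < q.2) ->
  disjoint_edges p q /\ disjoint_edges q p.
Proof.
case: p => [[a ha] [b hb]]; case: q => [[c hc] [d hd]] /=.
move=> h1 h2 h3 h4 h5 h6; rewrite /disjoint_edges /share_endpoint /cross -!val_eqE /=.
split; apply/andP; split; apply/negP => H; blia.
Qed.

Lemma partner N (y z s : nat) : y <= s -> s - y < N -> z < N ->
  (y + z) %% N = s %% N -> z = s - y.
Proof.
move=> h1 h2 h3 E; apply: (@mod_uniq N y) => //; by rewrite E subnKC.
Qed.

Lemma cls_part N (i j : 'I_N) (q : edge N) : i <= j -> q \in cls N ((i + j) %% N) ->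
  (i <= q.1 <= j -> q.2 = i + j - q.1 :> nat) /\ (i <= q.2 <= j -> q.1 = i + j - q.2 :> nat).
Proof.
move=> ij; rewrite inE => /andP [lt /eqP E]; split => /andP [h1 h2].
- have := ltn_ord j; have := ltn_ord q.2 => h3 h4.
  apply: (@partner N) => //; [tolia | tolia].
- have := ltn_ord j; have := ltn_ord q.1 => h3 h4.
  apply: (@partner N) => //; [tolia | tolia | by rewrite addnC].
Qed.

Lemma ends_mono N (M M' : {set edge N}) : M \subset M' -> ends M \subset ends M'.
Proof.
move=> S; apply/subsetP => x; rewrite !inE => /orP [] /imsetP [p pM ->];
  apply/orP; [left|right]; apply/imsetP; exists p => //; exact: (subsetP S).
Qed.

Lemma endsP N (M : {set edge N}) x : reflect (exists2 p, p \in M & (x = p.1) \/ (x = p.2)) (x \in ends M).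
Proof.
rewrite inE; apply: (iffP orP).
- by case => /imsetP [p pM ->]; exists p => //; [left|right].
- by case=> p pM [->|->]; [left|right]; apply/imsetP; exists p.
Qed.

Lemma block_side N (B : {set edge N}) (i j : 'I_N) (V : {set 'I_N}) :
  ~~ odd N -> blocking_set [set: 'I_N] B -> #|B| * 2 = N -> (i, j) \in B ->
  odd (i + j) -> (i, j) \in E_of V ->
  (forall q p, q \in cls N ((i + j) %% N) -> q \notin E_of V -> p \in E_of V ->
     disjoint_edges p q /\ disjoint_edges q p) ->
  forall M, SPM V M -> exists2 e, e \in B & e \in M.
Proof.
move=> eN [BS Hb] cB eB oij eV Hsep M SM.
case: (boolP [exists e in M, e \in B]) => [/exists_inP [e eM eB']|nex].
  by exists e.
exfalso.
have noB : forall e, e \in M -> e \notin B.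
  by move=> e eM; apply/negP => eB'; move/exists_inP: nex; apply; exists e.
have Npos : 0 < N by apply: (leq_ltn_trans (leq0n i) (ltn_ord i)).
set c0 := (i + j) %% N.
have oc0 : odd c0 by rewrite /c0 odd_mod ?oij //; apply/negbTE.
have c0N : c0 < N by rewrite /c0 ltn_pmod.
have eN2 : N = (N./2).*2 by rewrite -{1}(odd_double_half N) (negbTE eN).
have c0e : c0 = (c0./2).*2.+1 by rewrite -{1}(odd_double_half c0) oc0.
have t0lt : c0./2 < N./2.
  by rewrite -(@ltn_double) -eN2; apply: leq_ltn_trans c0N; rewrite {2}c0e.
pose t0 : 'I_N./2 := Ordinal t0lt.
pose M' := M :|: (cls N c0 :\: E_of V).
pose S (t : 'I_N./2) := if t == t0 then M' else cls N (t : nat).*2.+1.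
have clsSPM : forall t : 'I_N./2, SPM [set: 'I_N] (cls N (t : nat).*2.+1).
  move=> t; apply: cls_SPM => //; first by rewrite /= odd_double.
  by have := ltn_ord t; move: eN2; rewrite -!addnn => e2 h; tolia.
have [MS /eqP MC Mm] : [/\ M \subset E_of V, #|M| * 2 == #|V| & matching M] by apply/and3P; rewrite -SPME.
have SM' : SPM [set: 'I_N] M'.
  apply: SPM_intro.
  - apply/subsetP => p; rewrite !inE => /orP [/(subsetP MS) /E_ofP [lt _ _]|/andP [_ /andP [lt _]]];
      by rewrite lt.
  - apply/subsetP => x _; case: (boolP (x \in V)) => xV.
      by apply: (subsetP (ends_mono (subsetUl _ _))); apply: (subsetP (SPM_cover SM)).
    have : x \in ends (cls N c0) by apply: (subsetP (SPM_cover (cls_SPM eN oc0 c0N))).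
    case/endsP => g gc gx; apply/endsP; exists g => //.
    rewrite in_setU in_setD gc andbT; apply/orP; right; apply/negP => /E_ofP [_ g1 g2].
    by case: gx => ex; move: xV; rewrite ex ?g1 ?g2.
  - apply/matchingP => p q; rewrite !in_setU !in_setD => /orP [pM|/andP [pV pc]] /orP [qM|/andP [qV qc]] pq.
    + by move/matchingP: Mm; apply.
    + by case: (Hsep q p qc qV (subsetP MS p pM)).
    + by case: (Hsep p q pc pV (subsetP MS q qM)).
    + by move/matchingP: (cls_matching N c0); apply.
have SSPM : forall t, SPM [set: 'I_N] (S t).
  by move=> t; rewrite /S; case: (t == t0).
have inc : forall t x, x \in B -> x \in S t -> x \in cls N (t : nat).*2.+1.
  move=> t x xB; rewrite /S; case: (eqVneq t t0) => [->|//].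
  rewrite in_setU in_setD => /orP [xM|/andP [_ xc]]; last by rewrite /= -c0e.
  by move: (noB x xM); rewrite xB.
have cBe : #|B| = N./2.
  have e1 : #|B| * 2 = N./2 * 2 by rewrite cB muln2 -eN2.
  by apply/eqP; rewrite -(eqn_pmul2r (_ : 0 < 2)) // e1.
have : N./2 < #|B|; last by rewrite cBe ltnn.
apply: (@count_lb1 _ B N./2 S (i, j)).
- move=> t; apply: Hb; exact: SSPM.
- move=> t u x xB /(inc t x xB) /[swap] /(inc u x xB).
  rewrite !inE => /andP [_ /eqP E1] /andP [_ /eqP E2].
  apply: val_inj; apply: double_inj; apply: succn_inj; by rewrite -E1 -E2.
- done.
- move=> t; apply/negP => et.
  have := inc t _ eB et; rewrite inE /= => /andP [_ /eqP E].
  case: (eqVneq t t0) => [tt0|ne].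
    move: et; rewrite /S tt0 eqxx in_setU in_setD eV /= orbF => eM.
    by move: (noB _ eM); rewrite eB.
  move: ne; rewrite -val_eqE /=; apply/negP; rewrite negbK.
  apply/eqP; apply: double_inj; apply: succn_inj; rewrite -E.
  by rewrite -c0e.
Qed.

Lemma count_itv N i j : i <= j -> j < N ->
  count (fun n => (i <= n) && (n <= j)) (iota 0 N) = j.+1 - i.
Proof.
move=> ij jN.
have -> : N = i + ((j.+1 - i) + (N - j.+1)) by tolia.
rewrite !iotaD !count_cat add0n.
rewrite (@eq_in_count _ _ pred0); last first.
  by move=> x; rewrite mem_iota => /andP [_ h] /=; rewrite add0n in h; rewrite leqNgt h.
rewrite (@eq_in_count _ _ predT (iota i _)); last first.
  move=> x; rewrite mem_iota => /andP [h1 h2] /=; rewrite h1 /=; tolia.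
rewrite (@eq_in_count _ _ pred0 (iota (i + (j.+1 - i)) _)); last first.
  move=> x; rewrite mem_iota => /andP [h1 h2] /=; apply/negbTE; apply/negP => /andP [_ h3]; tolia.
by rewrite count_pred0 count_predT size_iota count_pred0 addn0.
Qed.

Lemma card_V1 N (i j : 'I_N) : i <= j ->
  #|[set x : 'I_N | (i <= x) && (x <= j)]| = j.+1 - i.
Proof.
move=> ij; rewrite cardsE cardE /enum_mem -enumT size_filter.
rewrite -(count_itv ij (ltn_ord j)) -val_enum_ord count_map.
by apply: eq_count.
Qed.

Lemma arith a b x y u w n : a./2 <= x -> b./2 <= y -> u + w = x + y -> w <= 1 -> u <= n ->
  n * 2 + 2 = a + b -> ~~ odd a -> ~~ odd b -> [/\ x * 2 = a, y * 2 = b & u = n].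
Proof.
move=> h1 h2 h3 h4 h5 h6 oa ob.
have ea : a = (a./2).*2 by rewrite -{1}(odd_double_half a) (negbTE oa).
have eb : b = (b./2).*2 by rewrite -{1}(odd_double_half b) (negbTE ob).
rewrite ea eb; rewrite ea eb in h6; move: h1 h2 h6; move: (a./2) (b./2) => a' b'.
rewrite -!addnn => h1 h2 h6.
split; tolia.
Qed.

Lemma odd_edge N (B : {set edge N}) (i j : 'I_N) : ~~ odd N ->
  blocking_set [set: 'I_N] B -> #|B| * 2 = N -> (i, j) \in B -> odd (i + j).
Proof.
move=> eN [BS Hb] cB eB; apply: contraT => ev.
have eN2 : N = (N./2).*2 by rewrite -{1}(odd_double_half N) (negbTE eN).
have cBe : #|B| = N./2.
  have e1 : #|B| * 2 = N./2 * 2 by rewrite cB muln2 -eN2.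
  by apply/eqP; rewrite -(eqn_pmul2r (_ : 0 < 2)) // e1.
have : N./2 < #|B|; last by rewrite cBe ltnn.
apply: (@count_lb1 _ B N./2 (fun t => cls N (t : nat).*2.+1) (i, j)).
- move=> t; apply: Hb; apply: cls_SPM => //; first by rewrite /= odd_double.
  by have := ltn_ord t; move: eN2; rewrite -!addnn => e2 h; tolia.
- move=> t u x _; rewrite !inE => /andP [_ /eqP E1] /andP [_ /eqP E2].
  apply: val_inj; apply: double_inj; apply: succn_inj; by rewrite -E1 -E2.
- done.
- move=> t; apply/negP; rewrite inE /= => /andP [_ /eqP E].
  have : odd ((i + j) %% N) by rewrite E /= odd_double.
  by rewrite odd_mod ?(negbTE ev) //; apply/negbTE.
Qed.

Lemma core N (B : {set edge N}) (i j : 'I_N) : ~~ odd N ->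
  blocker [set: 'I_N] B -> (i, j) \in B ->
  let V1 := [set x : 'I_N | (i <= x) && (x <= j)] in
  let V2 := [set x : 'I_N | (j <= x) || (x <= i)] in
  [/\ blocker V1 (B :&: E_of V1),
      blocker V2 (B :&: E_of V2)
    & (forall f, f \in B -> ~~ cross (i, j) f)].
Proof.
move=> eN [[BS Hb] cB] eB V1 V2.
rewrite cardsT card_ord in cB.
have ij : i < j by move: (subsetP BS _ eB) => /E_ofP [].
have oij := odd_edge eN (conj BS Hb) cB eB.
have jN := ltn_ord j.
have mV1 : forall x, (x \in V1) = (i <= x) && (x <= j) by move=> x; rewrite /V1 inE.
have mV2 : forall x, (x \in V2) = (j <= x) || (x <= i) by move=> x; rewrite /V2 inE.
have eV1 : (i, j) \in E_of V1.
  apply/E_ofP; split; first exact: ij.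
    by rewrite inE leqnn (ltnW ij).
  by rewrite inE leqnn (ltnW ij).
have sep1 : forall q p, q \in cls N ((i + j) %% N) -> q \notin E_of V1 ->
    p \in E_of V1 -> disjoint_edges p q /\ disjoint_edges q p.
  move=> q p qc qV /E_ofP [pl p1 p2].
  have ql : q.1 < q.2 by move: qc; rewrite inE => /andP [].
  have [P1 P2] := cls_part (ltnW ij) qc.
  move: p1 p2; rewrite !mV1 => p1 p2.
  have qV' : ~ [/\ q.1 < q.2, q.1 \in V1 & q.2 \in V1].
    by move=> H; move/negP: qV; apply; apply/E_ofP.
  have o1 : q.1 < i \/ j < q.1.
    case: (boolP ((i <= q.1) && (q.1 <= j))) => h.
      exfalso; apply: qV'; split => //; rewrite mV1 // .
      move: (P1 h) => e2; move/andP: h => [h1 h2]; rewrite e2; apply/andP; split; tolia.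
    by move: h; rewrite negb_and -!ltnNge => /orP [h|h]; [left|right].
  have o2 : q.2 < i \/ j < q.2.
    case: (boolP ((i <= q.2) && (q.2 <= j))) => h.
      exfalso; apply: qV'; split => //; rewrite mV1 // .
      by move: (P2 h) => e2; move/andP: h => [h1 h2]; rewrite e2; apply/andP; split; tolia.
    by move: h; rewrite negb_and -!ltnNge => /orP [h|h]; [left|right].
  move/andP: p1 => [p11 p12]; move/andP: p2 => [p21 p22].
  exact: (@sep_disj N p q i j pl ql p11 p22 o1 o2).
have bl1 : blocking_set V1 (B :&: E_of V1).
  split; first exact: subsetIr.
  move=> M SM.
  have [e eB' eM] := block_side eN (conj BS Hb) cB eB oij eV1 sep1 SM.
  exists e => //; rewrite inE eB'; case/andP: SM => /andP [S _] _; exact: (subsetP S).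
have eV2 : (i, j) \in E_of V2.
  apply/E_ofP; split; first exact: ij.
    by rewrite mV2 leqnn orbT.
  by rewrite mV2 leqnn.
have sep2 : forall q p, q \in cls N ((i + j) %% N) -> q \notin E_of V2 ->
    p \in E_of V2 -> disjoint_edges p q /\ disjoint_edges q p.
  move=> q p qc qV /E_ofP [pl p1 p2].
  have ql : q.1 < q.2 by move: qc; rewrite inE => /andP [].
  have [P1 P2] := cls_part (ltnW ij) qc.
  move: p1 p2; rewrite !mV2 => p1 p2.
  have qV' : ~ [/\ q.1 < q.2, q.1 \in V2 & q.2 \in V2].
    by move=> H; move/negP: qV; apply; apply/E_ofP.
  have [a1 a2 a3 a4] : [/\ i < q.1, q.1 < j, i < q.2 & q.2 < j].
    case: (boolP (q.1 \in V2)) => h1.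
      have h2 : q.2 \notin V2 by apply/negP => h2; apply: qV'.
      move: h2; rewrite mV2 negb_or -!ltnNge => /andP [h3 h4].
      have e2 := P2 (introT andP (conj (ltnW h4) (ltnW h3))).
      by rewrite e2; split; tolia.
    move: h1; rewrite mV2 negb_or -!ltnNge => /andP [h3 h4].
    have e2 := P1 (introT andP (conj (ltnW h4) (ltnW h3))).
    by rewrite e2; split; tolia.
  have b1 : p.1 < i.+1 \/ j.-1 < p.1.
    by case/orP: p1 => h; [right|left]; tolia.
  have b2 : p.2 < i.+1 \/ j.-1 < p.2.
    by case/orP: p2 => h; [right|left]; tolia.
  have c1 : i.+1 <= q.1 by [].
  have c2 : q.2 <= j.-1 by tolia.
  have [d1 d2] := @sep_disj N q p i.+1 j.-1 ql pl c1 c2 b1 b2.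
  by split.
have bl2 : blocking_set V2 (B :&: E_of V2).
  split; first exact: subsetIr.
  move=> M SM.
  have [e eB' eM] := block_side eN (conj BS Hb) cB eB oij eV2 sep2 SM.
  exists e => //; rewrite inE eB'; case/andP: SM => /andP [S _] _; exact: (subsetP S).
have cV1 : #|V1| = j.+1 - i by rewrite card_V1 // ltnW.
have UV : V1 :|: V2 = [set: 'I_N].
  apply/setP => x; rewrite in_setU in_setT mV1 mV2; case: (leqP i x) => hi /=; last by rewrite (ltnW hi) orbT.
  by case: (leqP x j) => hj //=; rewrite (ltnW hj).
have IV : V1 :&: V2 = [set i; j].
  apply/setP => x; rewrite in_setI mV1 mV2 !inE.
  apply/idP/idP.
    move=> H; bdestr; apply/orP; [right|left]; apply/eqP; apply: ord_inj; tolia.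
  case/orP => /eqP ->.
    by rewrite leqnn (ltnW ij) orbT.
  by rewrite leqnn (ltnW ij).
have cUV := cardsUI V1 V2.
rewrite UV IV cardsT card_ord cards2 cV1 in cUV.
have ijne : (i != j) by rewrite neq_ltn ij.
rewrite ijne in cUV.
have ev1 : ~~ odd #|V1|.
  have h : j.+1 - i + i.*2 = (i + j).+1 by rewrite -addnn; tolia.
  by move: (congr1 odd h); rewrite oddD odd_double addbF oddS oij /= cV1 => ->.
have ev2 : ~~ odd #|V2|.
  have : odd (N + 2) = odd (j.+1 - i + #|V2|) by rewrite cUV.
  by rewrite !oddD (negbTE eN) -cV1 (negbTE ev1) /= => <-.
have lb1 := transport_lb bl1 ev1.
have lb2 := transport_lb bl2 ev2.
set B1 := B :&: E_of V1.
set B2 := B :&: E_of V2.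
have I12 : B1 :&: B2 \subset [set (i, j)].
  apply/subsetP => -[a b]; rewrite !in_setI in_set1 => /andP [/andP [_ /E_ofP [ab a1 b1]] /andP [_ /E_ofP [_ a2 b2]]].
  move: a1 b1 a2 b2 ab; rewrite /= !mV1 !mV2 => a1 b1 a2 b2 ab.
  rewrite xpair_eqE; bdestr; apply/andP; split; apply/eqP; apply: ord_inj; tolia.
have cI : #|B1 :&: B2| <= 1 by rewrite -(cards1 (i, j)); apply: subset_leq_card.
have U12 : B1 :|: B2 \subset B by rewrite subUset !subsetIl.
have cU := subset_leq_card U12.
have cUB := cardsUI B1 B2.
rewrite -cV1 in cUV.
have [r1 r2 r3] := arith lb1 lb2 cUB cI cU (etrans (congr1 (addn^~ 2) cB) cUV) ev1 ev2.
have BU : B1 :|: B2 = B by apply/eqP; rewrite eqEcard U12 r3 leqnn.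
split.
- by split.
- by split.
- move=> f; rewrite -BU inE => /orP [] ; rewrite inE => /andP [_ /E_ofP [fl f1 f2]];
    move: f1 f2; rewrite ?mV1 ?mV2 => f1 f2; rewrite /cross /=; apply/negP => H; bdestr; tolia.
Qed.

Theorem mainTheorem11 (m : nat) (hm : 2 <= m)
  (B : {set edge (2 * m)}) (i j : 'I_(2 * m)) :
  blocker [set: 'I_(2 * m)] B -> (i, j) \in B ->
  let V1 := [set x : 'I_(2 * m) | (i <= x) && (x <= j)] in
  let V2 := [set x : 'I_(2 * m) | (j <= x) || (x <= i)] in
  [/\ blocker V1 (B :&: E_of V1),
      blocker V2 (B :&: E_of V2),
      (forall f, f \in B -> ~~ cross (i, j) f)
    & (forall e f, e \in B -> f \in B -> ~~ cross e f)].
Proof.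
move=> bB eB V1 V2.
have eN : ~~ odd (2 * m) by rewrite oddM.
have [h1 h2 h3] := core eN bB eB.
split => //.
move=> [a b] f abB fB.
by have [_ _] := core eN bB abB; apply.
Qed.
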